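(* Let $\gamma\in(0,1]$, $\alpha>0$ and $N$ be such that $0<\lambda=1-\gamma/N^\alpha<1$. Then $$-\frac1N\sum_{i=1}^b\big[(J^T(s^* ))^{-1}\big]_{ii}\,\tilde f_i(s^* )\ge\frac{\lambda\gamma}{3N^{1+\alpha}}.$$
   Context: $b\ge1$ is an integer. The mean-field vector field is $f_k(s)=\lambda(s_{k-1}^2-s_k^2)-(s_k-s_{k+1})$, $k=1,\dots,b$, with $s_0=1,s_{b+1}=0$; $s^*$ is its unique equilibrium in $\{s\in\mathbb R^b:1\ge s_1\ge\cdots\ge s_b\ge0\}$. $J(s^* )$ is the $b\times b$ tridiagonal Jacobian of $f$ at $s^*$ with $J_{kk}=-2\lambda s^*_k-1$, $J_{k,k+1}=1$, $J_{k+1,k}=2\lambda s^*_k$ (invertible). $\tilde f_i(s)=\frac12[\lambda(s_{i-1}^2-s_i^2)+(s_i-s_{i+1})]$. In the paper, $[(J^T(s^* ))^{-1}]_{ii}=\nabla^2 g(s)_{ii}$ for the solution $g$ of Stein's equation $\nabla g(s)\cdot J(s^* )(s-s^* )=\|s-s^*\|^2$, and the lemma is stated for $s$ with $\|s-s^*\|^{2r}\le N^{-\epsilon}$; the quantity does not depend on $s$. *)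

(* Defs.v *)
From HB Require Import structures.
From mathcomp Require Import all_boot all_order all_algebra.
From mathcomp Require Import all_classical all_reals all_analysis.
Set Implicit Arguments. Unset Strict Implicit. Unset Printing Implicit Defensive.
Import Order.TTheory GRing.Theory Num.Theory.
Local Open Scope ring_scope.

(* Vectors s in R^b are column vectors 'cV[R]_b; the paper's coordinate s_k
   (k = 1..b) is  s (k-1) 0.  Paper indices are 1-based, ordinals 0-based:
   ordinal i : 'I_b  <->  paper index i+1. *)

(* Extended sequence: sext s 0 = s_0 = 1, sext s k = s_k for 1 <= k <= b,
   sext s k = 0 for k >= b+1 (in particular s_{b+1} = 0). *)
Definition sext (R : realType) (b : nat) (s : 'cV[R]_b) (k : nat) : R :=
  if k == 0%N then 1 else oapp (fun i : 'I_b => s i 0) 0 (insub k.-1).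

Definition fmf (R : realType) (b : nat) (lam : R) (s : 'cV[R]_b) (i : 'I_b) : R :=
  lam * (sext s i ^+ 2 - sext s i.+1 ^+ 2) - (sext s i.+1 - sext s i.+2).

Definition ftilde (R : realType) (b : nat) (lam : R) (s : 'cV[R]_b) (i : 'I_b) : R :=
  2^-1 * (lam * (sext s i ^+ 2 - sext s i.+1 ^+ 2) + (sext s i.+1 - sext s i.+2)).

Definition Jac (R : realType) (b : nat) (lam : R) (s : 'cV[R]_b) : 'M[R]_b :=
  \matrix_(i < b, j < b)
    if i == j then - (2 * lam * s i 0) - 1
    else if (j : nat) == i.+1 then 1
    else if (i : nat) == j.+1 then 2 * lam * s j 0
    else 0.

Definition is_equilibrium (R : realType) (b : nat) (lam : R) (s : 'cV[R]_b) : Prop :=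
  (forall k : nat, (1 <= k <= b)%N -> sext s k.+1 <= sext s k) /\
  (forall i : 'I_b, 0 <= s i 0) /\ (forall i : 'I_b, s i 0 <= 1) /\
  (forall i : 'I_b, fmf lam s i = 0).

(* Main.v *)
Set Warnings "-all".
Require Import Defs.
From HB Require Import structures.
From mathcomp Require Import all_boot all_order all_algebra.
From mathcomp Require Import all_classical all_reals all_analysis.
From mathcomp Require Import ring lra zify.
Import Order.TTheory GRing.Theory Num.Theory.
Local Open Scope ring_scope.

Section S.
Variables (R : realType) (b : nat).

Definition W (w : 'I_b -> R) (n : nat) : R := oapp w 0 (insub n).

Lemma sum_pick (G : 'I_b -> R) (c : nat) :
  \sum_(j < b) (if (j : nat) == c then G j else 0) = W G c.
Proof.
rewrite /W; case: insubP => [c' Hc <-|Hc] /=.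
  rewrite (bigD1 c') //= eqxx big1 ?addr0 // => j /negbTE.
  by move=> hj; case: eqP => // /val_inj /eqP; rewrite hj.
by apply: big1 => j _; case: eqP => // e; move: Hc; rewrite -e ltn_ord.
Qed.

Lemma W_ord (w : 'I_b -> R) (k : 'I_b) : W w k = w k.
Proof. by rewrite /W valK. Qed.

Lemma W_scale (c : R) (w : 'I_b -> R) n : W (fun j => c * w j) n = c * W w n.
Proof. by rewrite /W; case: insub => //=; rewrite mulr0. Qed.

Lemma Jac_col (lam : R) (s : 'cV[R]_b) (w : 'I_b -> R) (k : 'I_b) :
  \sum_(j < b) w j * Jac lam s j k =
  (if (k : nat) is k'.+1 then W w k' else 0)
  - (2 * lam * s k 0 + 1) * w k + 2 * lam * s k 0 * W w k.+1.
Proof.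
have E : forall j : 'I_b, w j * Jac lam s j k =
   (if (j : nat) == k then - (2 * lam * s k 0 + 1) * w j else 0)
 + (if (k : nat) == j.+1 then w j else 0)
 + (if (j : nat) == k.+1 then 2 * lam * s k 0 * w j else 0).
  move=> j; rewrite /Jac mxE.
  have [->|ne] := eqVneq j k.
    rewrite eqxx; have -> : ((k : nat) == k.+1) = false by apply/eqP; lia.
    by rewrite !addr0 opprD mulrC.
  have ne' : ((j : nat) == k) = false by apply/negbTE; apply: contra ne => /eqP /val_inj ->.
  rewrite ne'.
  case: eqP => [hk|_].
    have -> : ((j : nat) == k.+1) = false by apply/eqP; lia.
    by rewrite mulr1 add0r addr0.
  case: eqP => [hj|_]; first by rewrite add0r add0r mulrC.
  by rewrite mulr0 !addr0.
rewrite (eq_bigr _ (fun j _ => E j)) !big_split /= sum_pick.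
rewrite (sum_pick (fun j => 2 * lam * s k 0 * w j)).
have -> : \sum_(j < b) (if (k : nat) == j.+1 then w j else 0) =
          (if (k : nat) is k'.+1 then W w k' else 0).
  case: (k : nat) => [|k'].
    by apply: big1.
  rewrite -sum_pick; apply: eq_bigr => j _; by rewrite eqSS eq_sym.
rewrite !W_scale W_ord; case: (nat_of_ord k) => [|k1]; ring.
Qed.

Lemma maxp (lam : R) (s : 'cV[R]_b) (w : 'I_b -> R) :
  0 <= lam -> (forall i, 0 <= s i 0) ->
  (forall k, 0 <= \sum_(j < b) w j * Jac lam s j k) -> forall k, w k <= 0.
Proof.
move=> hl hs hc k; rewrite leNgt; apply/negP => hk.
set im := [arg max_(i > k) w i]%O.
have Hm : forall j, w j <= w im.
  by rewrite /im; case: (arg_maxP (P := xpredT) w (erefl true)) => i _ h j; apply: h.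
have Mpos : 0 < w im by apply: lt_le_trans hk (Hm k).
have WM : forall n, W w n <= w im.
  by move=> n; rewrite /W; case: insub => /= [j|]; [apply: Hm | apply: ltW].
have exP : exists n, (n < b)%N && (W w n == w im).
  by exists (val im); rewrite ltn_ord W_ord eqxx.
case: (ex_minnP exP) => m /andP [mb /eqP Wm] mmin.
have := hc (Ordinal mb); rewrite Jac_col /=.
rewrite -[w (Ordinal mb)](W_ord) /= Wm.
have hprev : (if m is m'.+1 then W w m' else 0) < w im.
  case: m mb Wm mmin => [|m'] mb Wm mmin //.
  rewrite lt_neqAle WM andbT; apply/negP => /eqP e.
  have := mmin m'; rewrite e eqxx andbT => /(_ (ltnW mb)); by rewrite ltnn.
set pv := (if m is m'.+1 then W w m' else 0) in hprev *.
have ha : 0 <= 2 * lam * s (Ordinal mb) 0 by rewrite !mulr_ge0.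
have hn : 2 * lam * s (Ordinal mb) 0 * W w m.+1 <= 2 * lam * s (Ordinal mb) 0 * w im.
  by apply: ler_wpM2l.
set a := 2 * lam * s (Ordinal mb) 0 in ha hn *.
move=> h; lra.
Qed.

Lemma Jac_unit (lam : R) (s : 'cV[R]_b) :
  0 <= lam -> (forall i, 0 <= s i 0) -> Jac lam s \in unitmx.
Proof.
move=> hl hs; rewrite unitmxE unitfE; apply/negP => /det0P [v vn0 hv].
have hc : forall k, \sum_(j < b) v 0 j * Jac lam s j k = 0.
  by move=> k; have := congr1 (fun M : 'rV[R]_b => M 0 k) hv; rewrite !mxE.
have h1 := @maxp lam s (fun j => v 0 j) hl hs (fun k => ltac:(by rewrite hc)).
have h2 : forall k, - v 0 k <= 0.
  apply: (@maxp lam s (fun j => - v 0 j) hl hs) => k.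
  under eq_bigr => j _ do rewrite mulNr.
  by rewrite sumrN hc oppr0.
move/negP: vn0; apply; apply/eqP/rowP => j; rewrite mxE.
by apply/eqP; rewrite eq_le h1 -oppr_le0 h2.
Qed.

Lemma diag_bound (lam : R) (s : 'cV[R]_b) (i : 'I_b) :
  0 <= lam -> (forall i, 0 <= s i 0) ->
  1 <= - (invmx (Jac lam s) i i) * (2 * lam * s i 0 + 1).
Proof.
move=> hl hs.
have hX := mulVmx (@Jac_unit lam s hl hs).
set X := invmx (Jac lam s) in hX *.
have hc : forall k, \sum_(j < b) X i j * Jac lam s j k = (i == k)%:R.
  by move=> k; have := congr1 (fun M : 'M[R]_b => M i k) hX; rewrite !mxE.
have neg := @maxp lam s (fun j => X i j) hl hs (fun k => ltac:(by rewrite hc ler0n)).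
have Wn : forall n, W (fun j => X i j) n <= 0.
  by move=> n; rewrite /W; case: insub => /= [j|] //; apply: neg.
have := hc i; rewrite Jac_col eqxx /=.
have hp : (if (i : nat) is k'.+1 then W (fun j => X i j) k' else 0) <= 0.
  by case: (i : nat).
set pv := (if (i : nat) is k'.+1 then W (fun j => X i j) k' else 0) in hp *.
have ha : 0 <= 2 * lam * s i 0 by rewrite !mulr_ge0.
have hn : 2 * lam * s i 0 * W (fun j => X i j) i.+1 <= 0.
  by rewrite mulr_ge0_le0.
set a := 2 * lam * s i 0 in ha hn *.
move=> h; lra.
Qed.

Lemma tel (f : nat -> R) : \sum_(i < b) (f i - f i.+1) = f 0%N - f b.
Proof.
rewrite -(big_mkord xpredT (fun i => f i - f i.+1)).
have -> : \sum_(0 <= i < b) (f i - f i.+1) = - \sum_(0 <= i < b) (f i.+1 - f i).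
  by rewrite -sumrN; apply: eq_bigr => i _; rewrite opprB.
by rewrite telescope_sumr // opprB.
Qed.

Lemma sext_ord (s : 'cV[R]_b) (i : 'I_b) : sext s i.+1 = s i 0.
Proof. by rewrite /sext /= valK. Qed.

Lemma sext_out (s : 'cV[R]_b) : sext s b.+1 = 0.
Proof. by rewrite /sext /=; case: insubP => //= j; rewrite ltnn. Qed.

Lemma sext0 (s : 'cV[R]_b) : sext s 0 = 1.
Proof. by []. Qed.
End S.

Theorem lemma10 (R : realType) (b N : nat) (gamma alpha : R) (s : 'cV[R]_b) :
  (1 <= b)%N -> (0 < N)%N ->
  0 < gamma -> gamma <= 1 -> 0 < alpha ->
  let lam := 1 - gamma / (N%:R `^ alpha) in
  0 < lam -> lam < 1 ->
  is_equilibrium lam s ->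
  - (N%:R)^-1 * \sum_(i < b) (invmx (Jac lam s)^T) i i * ftilde lam s i
    >= lam * gamma / (3 * N%:R `^ (1 + alpha)).
Proof.
move=> hb hN hg hg1 ha lam hl0 hl1 [mono [hs0 [hs1 hf]]].
set X := invmx (Jac lam s).
set d := fun i : nat => sext s i.+1 - sext s i.+2.
have hft : forall i : 'I_b, ftilde lam s i = d i.
  move=> i; have := hf i; rewrite /fmf /ftilde /d => h.
  have -> : lam * (sext s i ^+ 2 - sext s i.+1 ^+ 2) = sext s i.+1 - sext s i.+2 by lra.
  by field.
have hd : forall i : 'I_b, 0 <= d i.
  move=> i; rewrite /d subr_ge0; apply: mono; rewrite ltn_ord andbT //.
have hterm : forall i : 'I_b, d i <= (2 * lam + 1) * (- X i i * d i).
  move=> i; have := @diag_bound R b lam s i (ltW hl0) hs0; rewrite -/X => h.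
  have hsi := hs1 i; have hsi0 := hs0 i; have hdi := hd i.
  have hp : 0 < 2 * lam * s i 0 + 1.
    by apply: ltr_wpDl => //; rewrite !mulr_ge0 // ltW.
  have hx : 0 <= - X i i by rewrite -(pmulr_lge0 _ hp); apply: le_trans h.
  have h3 : d i <= (- X i i * (2 * lam * s i 0 + 1)) * d i by rewrite ler_peMl.
  have h4 : 2 * lam * s i 0 <= 2 * lam.
    by rewrite -{2}[2 * lam]mulr1 ler_wpM2l // mulr_ge0 // ltW.
  have h5 : 0 <= - X i i * d i by rewrite mulr_ge0.
  nra.
set S := \sum_(i < b) (invmx (Jac lam s)^T) i i * ftilde lam s i.
have hS : - S = \sum_(i < b) (- X i i * d i).
  rewrite /S -sumrN; apply: eq_bigr => i _.
  by rewrite -trmx_inv mxE hft mulNr.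
have hsumd : \sum_(i < b) d i = sext s 1.
  by rewrite (@tel R b (fun i => sext s i.+1)) sext_out subr0.
have hS2 : sext s 1 <= (2 * lam + 1) * (- S).
  rewrite hS mulr_sumr -hsumd; apply: ler_sum => i _; exact: hterm.
have hfsum : lam * (1 - sext s b ^+ 2) = sext s 1.
  have : \sum_(i < b) fmf lam s i = 0 by apply: big1 => i _; apply: hf.
  rewrite /fmf sumrB -mulr_sumr (@tel R b (fun i => sext s i ^+ 2))
          (@tel R b (fun i => sext s i.+1)) sext_out sext0 => h; lra.
have hmon : forall k, (1 <= k <= b)%N -> sext s k <= sext s 1.
  elim=> [//|k IH] /andP [h1 h2].
  case: k IH h1 h2 => [//|k] IH _ h2.
  apply: le_trans (mono k.+1 _) (IH _); lia.
have hsb : sext s b <= sext s 1 by apply: hmon; rewrite hb leqnn.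
have hsb0 : 0 <= sext s b.
  rewrite /sext; case: (b == 0%N) => //; case: insub => //= j; exact: hs0.
have hs1l : sext s 1 <= lam.
  have : 0 <= sext s b ^+ 2 by rewrite sqr_ge0.
  nra.
have hsbl : sext s b <= lam by apply: le_trans hsb hs1l.
have hsb2 : sext s b ^+ 2 <= lam ^+ 2.
  by rewrite ler_pXn2r // ?nnegrE // ltW.
have hs1g : lam * (1 - lam ^+ 2) <= sext s 1.
  rewrite -hfsum; apply: ler_wpM2l; [exact: ltW | lra].
set T := - S in hS2 *.
have hT : lam * (1 - lam) / 3 <= T.
  have h1 : lam * (1 - lam) * (2 * lam + 1) <= 3 * T * (2 * lam + 1).
    have : 0 <= lam * (1 - lam) * lam by apply: mulr_ge0; first apply: mulr_ge0; lra.
    nra.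
  have h2 : lam * (1 - lam) <= 3 * T.
    by move: h1; rewrite ler_pM2r //; lra.
  rewrite ler_pdivrMr //; lra.
have hn : 0 < N%:R :> R by rewrite ltr0n.
have hP : 0 < N%:R `^ alpha :> R by rewrite powR_gt0.
have hgam : gamma = (1 - lam) * N%:R `^ alpha.
  by rewrite /lam; field; rewrite lt0r_neq0.
have hpow : N%:R `^ (1 + alpha) = N%:R * N%:R `^ alpha :> R.
  rewrite powRD ?powRr1 ?ler0n //; apply/implyP => _; exact: lt0r_neq0.
have -> : lam * gamma / (3 * N%:R `^ (1 + alpha)) = N%:R^-1 * (lam * (1 - lam) / 3).
  rewrite hpow hgam; field.
  by rewrite !lt0r_neq0.
rewrite mulNr -mulrN -/T.
by apply: ler_wpM2l => //; rewrite invr_ge0 ltW.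
Qed.
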